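(* If $f(t)$ is the $f$-polynomial of a simplicial complex, then $f(t)+t f'(t)$ is the $f$-polynomial of a simplicial complex. Equivalently, if $(1,f_0,\dots,f_{d-1})$ is the $f$-vector of a simplicial complex, then so is $(1,2f_0,3f_1,\dots,(d+1)f_{d-1})$.
   Context: A simplicial complex $\Delta$ on a finite ground set is a family of subsets closed under taking subsets; its $f$-vector is $(f_{-1},f_0,\dots,f_{d-1})$ with $f_i$ the number of faces of cardinality $i+1$ ($f_{-1}=1$), and its $f$-polynomial is $\sum_{i=0}^{d}f_{i-1}t^i$. *)

(* Defs.v *)
From mathcomp Require Import all_boot all_order all_algebra.
Set Implicit Arguments. Unset Strict Implicit. Unset Printing Implicit Defensive.
Import GRing.Theory.
Local Open Scope ring_scope.

(* We require it to be nonempty (i.e. to contain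
   the empty face), matching the convention f_{-1} = 1. *)
Definition simplicial_complex (T : finType) (D : {set {set T}}) : Prop :=
  set0 \in D /\ forall F G : {set T}, F \in D -> G \subset F -> G \in D.

(* fcard D i = number of faces of cardinality i, i.e. f_{i-1}. *)
Definition fcard (T : finType) (D : {set {set T}}) (i : nat) : nat :=
  #|[set F in D | #|F| == i]|.

(* f-polynomial: sum_{i=0}^{d} f_{i-1} t^i  (faces have size <= #|T|). *)
Definition fpoly (T : finType) (D : {set {set T}}) : {poly int} :=
  \sum_(i < #|T|.+1) ((fcard D i)%:R : int) *: 'X^i.

(* Main.v *)
Require Import Defs.
From mathcomp Require Import all_boot all_order all_algebra.
Local Open Scope ring_scope.
Import GRing.Theory.

Set Implicit Arguments.
Section Aux.
Variable T : finType.

Definition phi (F : {set T}) (o : option T) : {set T * bool} :=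
  [set (x, o == Some x) | x in F].

Definition valid (F : {set T}) (o : option T) : bool :=
  if o is Some x then x \in F else true.

Lemma in_phi F o y b : ((y, b) \in phi F o) = (y \in F) && (b == (o == Some y)).
Proof.
apply/imsetP/andP => [[x xF [-> ->]]|[yF /eqP ->]]; first by split.
by exists y.
Qed.

Lemma card_phi F o : #|phi F o| = #|F|.
Proof. by apply: card_imset => x y [->]. Qed.

Definition Dp (D : {set {set T}}) : {set {set T * bool}} :=
  [set G : {set T * bool} | [exists F in D, exists o : option T, G \subset phi F o]].

Definition proj (G : {set T * bool}) : {set T} := [set x.1 | x in G].

Definition restr (P : {set T}) (o : option T) : option T :=
  if o is Some x then (if x \in P then o else None) else None.

Lemma Dp_char (D : {set {set T}}) (G : {set T * bool}) :
  simplicial_complex D ->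
  G \in Dp D -> exists F o, [/\ F \in D, valid F o & G = phi F o].
Proof.
move=> [_ HD]; rewrite inE => /existsP [F /andP [FD /existsP [o GF]]].
have sub : proj G \subset F.
  apply/subsetP => x /imsetP [[y b] yG ->] /=.
  by move: (subsetP GF _ yG); rewrite in_phi => /andP [].
exists (proj G), (restr (proj G) o); split.
- exact: HD FD sub.
- by rewrite /restr; case: o {GF} => // x; case: ifP.
- apply/setP => [[y b]]; rewrite in_phi.
  have Ho : forall y, y \in proj G -> (restr (proj G) o == Some y) = (o == Some y).
    move=> z zP; rewrite /restr; case: o {GF} => [x|] //.
    case: ifP => // /negbT xnP; apply/esym/eqP => -[ex]; subst.
    by rewrite zP in xnP.
  apply/idP/andP => [yG|[yP /eqP ->]].
    have yP : y \in proj G by apply/imsetP; exists (y, b).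
    split => //; rewrite Ho //.
    by move: (subsetP GF _ yG); rewrite in_phi => /andP [].
  case/imsetP: (yP) => [[z c] zG /= ez]; subst z.
  move: (subsetP GF _ zG); rewrite in_phi => /andP [_ /eqP ec]; subst c.
  by rewrite Ho.
Qed.

Lemma Dp_sc D : simplicial_complex D -> simplicial_complex (Dp D).
Proof.
move=> [D0 _]; split.
  rewrite inE; apply/existsP; exists set0; rewrite D0 /=.
  by apply/existsP; exists None; rewrite sub0set.
move=> F G; rewrite !inE => /existsP [H /andP [HD /existsP [o FH]]] GF.
apply/existsP; exists H; rewrite HD /=; apply/existsP; exists o.
exact: subset_trans GF FH.
Qed.

Lemma phi_inj F o F' o' : valid F o -> valid F' o' -> phi F o = phi F' o' ->
  F = F' /\ o = o'.
Proof.
move=> v v' e.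
have eF : F = F'.
  apply/setP => x; apply/idP/idP => xF.
    by move: (in_phi F o x (o == Some x)); rewrite xF eqxx e in_phi => /andP [].
  by move: (in_phi F' o' x (o' == Some x)); rewrite xF eqxx -e in_phi => /andP [].
subst F'; split => //.
case: o v e => [x|] /= v e.
  move: (in_phi F (Some x) x true); rewrite v eqxx e in_phi v /=.
  by rewrite eqxx; case: (o' =P Some x) => [->|].
case: o' v' e => [x|] /= v' e //.
move: (in_phi F (Some x) x true); rewrite v' eqxx -e in_phi v' /=.
by rewrite eqxx.
Qed.

Lemma fcard_Dp D (i : nat) : simplicial_complex D ->
  Defs.fcard (Dp D) i = (i.+1 * Defs.fcard D i)%N.
Proof.
move=> HD.
pose P := [set p : {set T} * option T | [&& p.1 \in D, #|p.1| == i & valid p.1 p.2]].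
rewrite /Defs.fcard.
have -> : [set G in Dp D | #|G| == i] = [set phi p.1 p.2 | p in P].
  apply/setP => G; rewrite inE; apply/andP/imsetP.
    move=> [GD Gi]; case: (Dp_char HD GD) => F [o [FD v eG]].
    exists (F, o) => //; rewrite inE /= FD v -(card_phi F o) -eG Gi.
    by [].
  move=> [[F o]]; rewrite inE /= => /and3P [FD Fi v] ->; split.
    rewrite inE; apply/existsP; exists F; rewrite FD /=.
    by apply/existsP; exists o.
  by rewrite card_phi.
rewrite card_in_imset; last first.
  move=> [F o] [F' o']; rewrite !inE /= => /and3P [_ _ v] /and3P [_ _ v'] e.
  by case: (phi_inj v v' e) => -> ->.
rewrite -sum1_card.
rewrite (eq_bigl (fun p => (p.1 \in [set F in D | #|F| == i]) && valid p.1 p.2));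
  last by move=> [F o]; rewrite !inE /= andbA.
rewrite -(pair_big_dep (fun F => F \in [set F in D | #|F| == i]) valid (fun _ _ => 1%N)) /=.
rewrite (eq_bigr (fun _ => i.+1)); last first.
  move=> F; rewrite inE => /andP [_ /eqP Fi].
  rewrite (eq_bigl (fun o => o \in None |: (Some @: F))); last first.
    move=> o; rewrite !inE; case: o => [x|] //=.
    by rewrite mem_imset //; exact: Some_inj.
  rewrite sum1_card cardsU1 card_imset; last exact: Some_inj.
  rewrite Fi; case: imsetP => // [[x _]] //.
by rewrite sum_nat_const mulnC.
Qed.

Lemma coef_fpoly (U : finType) (E : {set {set U}}) k :
  (fpoly E)`_k = (Defs.fcard E k)%:R.
Proof.
rewrite /fpoly coef_sum.
under eq_bigr do rewrite coefZ coefXn.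
case: (ltnP k #|U|.+1) => hk.
  rewrite (bigD1 (Ordinal hk)) //= eqxx mulr1 big1 ?addr0 //.
  move=> j /eqP nj.
  case: eqP => [ej|]; last by rewrite mulr0.
  by exfalso; apply: nj; apply: val_inj.
rewrite big1; last by move=> j _; case: eqP => [ej|]; [move: (ltn_ord j); rewrite -ej ltnNge hk | rewrite mulr0].
rewrite /Defs.fcard; suff -> : [set F in E | #|F| == k] = set0 by rewrite cards0.
apply/setP => F; rewrite !inE; case: eqP => [eF|]; last by rewrite andbF.
by move: (max_card F); rewrite eF => /(leq_ltn_trans)/(_ hk); rewrite ltnn.
Qed.

End Aux.

Theorem proposition3p7 (T : finType) (D : {set {set T}}) :
  simplicial_complex D ->
  exists (T' : finType) (D' : {set {set T'}}),
    simplicial_complex D' /\ fpoly D' = fpoly D + 'X * (fpoly D)^`().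
Proof.
move=> HD; exists (T * bool)%type, (Dp D); split; first exact: Dp_sc.
apply/polyP => k; rewrite coefD coefXM !coef_fpoly fcard_Dp //.
case: k => [|k] /=; first by rewrite mul1n addr0.
by rewrite coef_deriv coef_fpoly -mulrS mulnC mulrnA.
Qed.
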